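(* For every finite simple undirected graph $G$, $\chi_{pcf}(G)\leq 2\,\mathrm{scol}_{2}(G)-1$.
   Context: All graphs are finite, simple and undirected. For a graph $G$, a $c$-colouring is a function $\psi:V(G)\to C$ with $|C|\le c$; it is proper if $\psi(u)\neq\psi(v)$ for every edge $uv$. With $N(v)=\{w: vw\in E(G)\}$, a colouring $\psi$ is conflict-free if for every vertex $v$ with $|N(v)|>0$ there is a colour $\alpha$ such that exactly one $w\in N(v)$ has $\psi(w)=\alpha$. The proper conflict-free chromatic number $\chi_{pcf}(G)$ is the minimum $c$ such that $G$ has a proper conflict-free $c$-colouring. For a total order $\preceq$ of $V(G)$, a vertex $v$ and an integer $s\ge1$, let $R(G,\preceq,v,s)$ be the set of vertices $w$ such that $w\preceq v$ and there is a path $v=w_0,w_1,\dots,w_{s'}=w$ of length $s'\in\{0,1,\dots,s\}$ with $v\prec w_i$ for all $i\in\{1,\dots,s'-1\}$. The $s$-strong colouring number $\mathrm{scol}_s(G)$ is the minimum integer $c$ such that there is a total order $\preceq$ of $V(G)$ with $|R(G,\preceq,v,s)|\le c$ for every vertex $v$. *)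

(* Defs.v *)
From mathcomp Require Import all_boot.
Set Implicit Arguments. Unset Strict Implicit. Unset Printing Implicit Defensive.

Record sgraph := SGraph {
  vert :> finType;
  adj : rel vert;
  adj_sym : symmetric adj;
  adj_irr : irreflexive adj }.

Section Defs.
Variable G : sgraph.

Definition proper_col c (f : {ffun G -> 'I_c}) : bool :=
  [forall u : G, forall v : G, adj u v ==> (f u != f v)].

Definition conflict_free c (f : {ffun G -> 'I_c}) : bool :=
  [forall v : G, [exists w : G, adj v w] ==>
     [exists a : 'I_c, #|[set w : G | adj v w & f w == a]| == 1]].

Definition has_pcf (c : nat) : bool :=
  [exists f : {ffun G -> 'I_c}, proper_col f && conflict_free f].

Lemma has_pcf_ex : exists c, has_pcf c.
Proof.
exists #|G|; apply/existsP; exists [ffun x => enum_rank x].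
apply/andP; split.
  apply/forallP => u; apply/forallP => v; apply/implyP => huv.
  rewrite !ffunE; apply/negP => /eqP /enum_rank_inj huv'.
  by move: huv; rewrite huv' (@adj_irr G v).
apply/forallP => v; apply/implyP => /existsP [w hw].
apply/existsP; exists (enum_rank w); apply/eqP.
suff -> : [set x : G | adj v x & [ffun x => enum_rank x] x == enum_rank w] = [set w].
  by rewrite cards1.
apply/setP => x.
rewrite !inE ffunE; apply/andP/eqP.
  by case=> _ /eqP /enum_rank_inj.
by move=> ->; rewrite hw eqxx.
Qed.

Definition chi_pcf : nat := ex_minn has_pcf_ex.

(* A total order on V(G) is represented by an injective rank function
   r : V -> 'I_#|V| ;  x <= y  iff  r x <= r y. *)
Definition Rset2 (r : {ffun G -> 'I_#|G|}) (v : G) : {set G} :=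
  [set w : G | (r w <= r v) &&
     [|| w == v, adj v w | [exists u : G, [&& adj v u, adj u w & r v < r u]]]].

Definition has_scol2 (c : nat) : bool :=
  [exists r : {ffun G -> 'I_#|G|}, injectiveb r && [forall v : G, #|Rset2 r v| <= c]].

Lemma has_scol2_ex : exists c, has_scol2 c.
Proof.
exists #|G|; apply/existsP; exists [ffun x => enum_rank x].
apply/andP; split.
  by apply/injectiveP => x y; rewrite !ffunE => /enum_rank_inj.
by apply/forallP => v; apply: max_card.
Qed.

Definition scol2 : nat := ex_minn has_scol2_ex.

End Defs.

(* Main.v *)
Require Import Defs.
From mathcomp Require Import all_boot.
From mathcomp Require Import zify.

Lemma greedy (T : finType) (r : T -> nat) (F : T -> {set T}) (c N : nat) :
  (forall x y, y \in F x -> r y < r x) -> (forall x, #|F x| < c) ->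
  (forall x, r x < N) ->
  exists f : {ffun T -> 'I_c}, forall x, f x \notin f @: F x.
Proof.
move=> HF Hc HN.
suff: forall n, exists f : {ffun T -> 'I_c}, forall x, r x < n -> f x \notin f @: F x.
  by case/(_ N) => f Hf; exists f => x; apply: Hf.
elim=> [|n [f Hf]].
  by exists [ffun x => @Ordinal c 0 (leq_ltn_trans (leq0n _) (Hc x))].
pose f' := [ffun z => if r z == n then odflt (f z) [pick a | a \notin f @: F z] else f z].
exists f' => x Hx.
have Him : f' @: F x = f @: F x.
  apply: eq_in_imset => y /HF Hy; rewrite ffunE.
  by have -> : (r y == n) = false by apply/eqP; lia.
rewrite Him ffunE.
case: eqP => Hxn; last by apply: Hf; lia.
case: pickP => [a //|Hnone] /=.
exfalso.
have : #|'I_c| <= #|f @: F x|.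
  apply: subset_leq_card; apply/subsetP => a _.
  by move: (Hnone a); move/negbT; rewrite negbK.
rewrite card_ord => H1.
have := leq_imset_card f (F x).
have := Hc x. lia.
Qed.

Theorem theorem1 (G : sgraph) : chi_pcf G <= 2 * scol2 G - 1.
Proof.
rewrite /scol2; case: ex_minnP => k /existsP [r /andP [/injectiveP Hinj /forallP Hk]] _.
rewrite /chi_pcf; case: ex_minnP => c _ Hmin; apply: Hmin.
pose m (u : G) := if [pick w | adj u w & [forall w', adj u w' ==> (r w <= r w')]]
  is Some w then w else u.
have hm : forall u w, adj u w -> adj u (m u) /\ r (m u) <= r w.
  move=> u w Huw; rewrite /m; case: pickP => [w' /andP [h1 /forallP h2]|hnone].
    by split => //; move/implyP: (h2 w); apply.
  exfalso.
  case: (arg_minnP (fun w => nat_of_ord (r w)) Huw) => w0 hw0 hmin.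
  move: (hnone w0); rewrite hw0 /=; move/negbT/negP; apply.
  by apply/forallP => w'; apply/implyP; apply: hmin.
have rinj : forall u v, (nat_of_ord (r u) == r v) = (u == v).
  move=> u v; apply/eqP/eqP => [/val_inj /Hinj //|-> //].
pose F (x : G) := [set y | (r y < r x) && (adj x y || [exists u, adj x u && (m u == y)])].
have HF : forall x y, y \in F x -> r y < r x.
  by move=> x y; rewrite inE => /andP [].
have Hcard : forall x, #|F x| < 2 * k - 1.
  move=> x.
  pose S1 := Rset2 r x :\ x.
  pose S2 := [set u | adj x u & r u < r x].
  have HS2 : S2 \subset S1.
    apply/subsetP => u; rewrite !inE => /andP [h1 h2].
    rewrite h1 orbT (ltnW h2) !andbT.
    by apply/eqP => E; move: h2; rewrite E ltnn.
  have HFS : F x \subset S1 :|: m @: S2.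
    apply/subsetP => y; rewrite inE => /andP [hy /orP [hxy|/existsP [u /andP [hxu /eqP hmu]]]].
      apply/setUP; left; rewrite !inE hxy orbT (ltnW hy) !andbT.
      by apply/eqP => E; move: hy; rewrite E ltnn.
    case: (ltngtP (r u) (r x)) => hux.
    - apply/setUP; right; apply/imsetP; exists u => //.
      by rewrite inE hxu hux.
    - apply/setUP; left; rewrite !inE (ltnW hy) /=.
      apply/andP; split.
        by apply/eqP => E; move: hy; rewrite E ltnn.
      apply/orP; right; apply/orP; right; apply/existsP; exists u.
      rewrite hxu hux andbT /= -hmu.
      by case: (hm u x) => //; rewrite adj_sym.
    - by move/eqP: hux; rewrite rinj => /eqP E; move: hxu; rewrite E adj_irr.
  have h1 := subset_leq_card HFS.
  have h2 := cardsU S1 (m @: S2).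
  have h3 := leq_imset_card m S2.
  have h4 := subset_leq_card HS2.
  have h5 := cardsD1 x (Rset2 r x).
  have h6 : x \in Rset2 r x by rewrite inE leqnn eqxx.
  rewrite h6 in h5.
  have h7 := Hk x.
  rewrite -/S1 in h5.
  lia.
have [f Hf] := @greedy G (fun x => nat_of_ord (r x)) F _ _ HF Hcard (fun x => ltn_ord (r x)).
have Hnot : forall x y, y \in F x -> f x != f y.
  move=> x y hy; apply/eqP => E; move: (Hf x); rewrite E.
  by move/negP; apply; apply/imsetP; exists y.
apply/existsP; exists f; apply/andP; split.
  apply/forallP => u; apply/forallP => v; apply/implyP => huv.
  case: (ltngtP (r u) (r v)) => h.
  - by rewrite eq_sym; apply: Hnot; rewrite inE h adj_sym huv.
  - by apply: Hnot; rewrite inE h huv.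
  - by move/eqP: h; rewrite rinj => /eqP E; move: huv; rewrite E adj_irr.
apply/forallP => v; apply/implyP => /existsP [w hw].
apply/existsP; exists (f (m v)); apply/eqP.
suff -> : [set w0 : G | adj v w0 & f w0 == f (m v)] = [set m v] by rewrite cards1.
apply/setP => y; rewrite !inE.
case: (hm v w hw) => hvm _.
apply/andP/eqP => [[hy /eqP hf]|->]; last by rewrite hvm eqxx.
apply/eqP; apply: contraT => hne.
have hlt : r (m v) < r y.
  case: (hm v y hy) => _; rewrite leq_eqVlt => /orP [|//].
  by rewrite rinj eq_sym (negbTE hne).
move: (Hnot y (m v)); rewrite hf eqxx; apply => //.
rewrite inE hlt /=; apply/orP; right; apply/existsP; exists v.
by rewrite adj_sym hy eqxx.
Qed.
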